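(* \begin{enumerate} \item If $n+1$ is a prime power, then for any $2\leq t \leq n$ there is a lattice packing of $\mathbb{Z}^n$ by $\mathcal{B}(n,t,1,0)$ with density \[\delta=\frac{\sum_{i=0}^t\binom{n}{i} }{(n+1)^t-1}=\frac{1}{t!}+o(1).\] \item If $n$ is a prime power, then for any $2\leq t \leq n$ there is a lattice packing of $\mathbb{Z}^n$ by $\mathcal{B}(n,t,1,0)$ with density \[\delta=\frac{\sum_{i=0}^t\binom{n}{i}}{(n^{t+1}-1)/(n-1)}=\frac{1}{t!}+o(1).\] \end{enumerate} Here $o(1)$ refers to $n\to\infty$ with $t$ fixed.
   Context: $\mathcal{B}(n,t,k_+,k_-)=\{\mathbf{x}\in\mathbb{Z}^n : -k_-\le x_i\le k_+ \text{ for all } i,\ \mathrm{wt}(\mathbf{x})\le t\}$, where $\mathrm{wt}$ is the Hamming weight. A lattice packing of $\mathbb{Z}^n$ by $\mathcal{B}$ is a lattice $\Lambda\subseteq\mathbb{Z}^n$ (additive subgroup) such that the translates $\mathbf{v}+\mathcal{B}$, $\mathbf{v}\in\Lambda$, are pairwise disjoint; its density is $|\mathcal{B}|/\mathrm{vol}(\Lambda)$, where $\mathrm{vol}(\Lambda)=|\mathbb{Z}^n/\Lambda|$. *)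

(* Defs.v *)
From mathcomp Require Import all_boot all_order all_algebra.
Set Implicit Arguments. Unset Strict Implicit. Unset Printing Implicit Defensive.
Import Order.TTheory GRing.Theory Num.Theory.
Local Open Scope ring_scope.

Definition wt (n : nat) (x : 'rV[int]_n) : nat := #|[set i : 'I_n | x 0 i != 0]|.

(* Codes for vectors with entries in [-km, kp]: c i in {0..kp+km} encodes c i - km *)
Definition embed (n kp km : nat) (c : {ffun 'I_n -> 'I_(kp + km).+1}) : 'rV[int]_n :=
  \row_i ((nat_of_ord (c i))%:Z - km%:Z).

Definition ball_code (n t kp km : nat) : {set {ffun 'I_n -> 'I_(kp + km).+1}} :=
  [set c | (wt (embed c) <= t)%N].

Definition in_ball (n t kp km : nat) (x : 'rV[int]_n) : Prop :=
  (forall i, - (km%:Z) <= x 0 i <= kp%:Z) /\ (wt x <= t)%N.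

(* |B(n,t,kp,km)| (embed is a bijection from ball_code onto the ball) *)
Definition ball_size (n t kp km : nat) : nat := #|ball_code n t kp km|.

Definition is_lattice (n : nat) (L : 'rV[int]_n -> Prop) : Prop :=
  L 0 /\ (forall x y, L x -> L y -> L (x - y)).

(* vol(Lambda) = |Z^n / Lambda| = V : a complete system of V pairwise
   incongruent coset representatives *)
Definition lattice_vol (n : nat) (L : 'rV[int]_n -> Prop) (V : nat) : Prop :=
  exists r : 'I_V -> 'rV[int]_n,
    (forall i j, L (r i - r j) -> i = j) /\ (forall x, exists i, L (x - r i)).

Definition is_packing (n t kp km : nat) (L : 'rV[int]_n -> Prop) : Prop :=
  forall v w b1 b2, L v -> L w -> in_ball t kp km b1 -> in_ball t kp km b2 ->
    v + b1 = w + b2 -> v = w.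

Definition lattice_packing_with_density (n t kp km : nat) (d : rat) : Prop :=
  exists (L : 'rV[int]_n -> Prop) (V : nat),
    [/\ is_lattice L, lattice_vol L V, is_packing t kp km L &
        d = (ball_size n t kp km)%:R / V%:R].

Definition prime_power (m : nat) : Prop := exists p k, prime p /\ (0 < k)%N /\ m = (p ^ k)%N.

Definition delta1 (n t : nat) : rat :=
  (\sum_(i < t.+1) 'C(n, i))%N%:R / ((n.+1 ^ t)%N%:R - 1).

Definition delta2 (n t : nat) : rat :=
  (\sum_(i < t.+1) 'C(n, i))%N%:R / (((n ^ t.+1)%N%:R - 1) / (n%:R - 1)).

(* Main.v *)
Require Import Defs.
From mathcomp Require Import all_boot all_order all_algebra all_field.
From mathcomp Require Import ring lra zify.
From mathcomp Require cyclic.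
Import Order.TTheory GRing.Theory Num.Theory.
Set Implicit Arguments. Unset Strict Implicit. Unset Printing Implicit Defensive.
Local Open Scope ring_scope.
Lemma card_small_sets (T : finType) t :
  #|[set S : {set T} | (#|S| <= t)%N]| = (\sum_(i < t.+1) 'C(#|T|, i))%N.
Proof.
elim: t => [|t IH].
  rewrite big_ord_recr big_ord0 /= -card_draws; apply: eq_card => S.
  by rewrite !inE leqn0.
rewrite big_ord_recr /= -IH -card_draws -cardsUI.
have -> : [set S : {set T} | (#|S| <= t)%N] :&: [set S : {set T} | #|S| == t.+1] = set0.
  apply/setP => S; rewrite !inE; apply/negbTE; apply/andP => [[h /eqP e]].
  by move: h; rewrite e ltnn.
rewrite cards0 addn0; apply: eq_card => S; rewrite !inE leq_eqVlt ltnS orbC.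
by [].
Qed.

Definition phi01 n (c : {ffun 'I_n -> 'I_(1 + 0).+1}) : {set 'I_n} :=
  [set i | (nat_of_ord (c i) != 0)%N].

Lemma wt_embed01 n (c : {ffun 'I_n -> 'I_(1 + 0).+1}) : wt (embed c) = #|phi01 c|.
Proof. by apply: eq_card => i; rewrite !inE mxE subr0. Qed.

Lemma phi01_inj n : injective (@phi01 n).
Proof.
move=> c1 c2 e; apply/ffunP => i; apply/val_inj.
have : (i \in phi01 c1) = (i \in phi01 c2) by rewrite e.
rewrite !inE; case: (c1 i) => [[|[|a]] ?] //; case: (c2 i) => [[|[|b]] ?] //.
Qed.

Lemma ball_size01 n t : ball_size n t 1 0 = (\sum_(i < t.+1) 'C(n, i))%N.
Proof.
rewrite /ball_size -(card_imset _ (@phi01_inj n)).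
under eq_bigr => i _ do rewrite -[n in 'C(n, _)]card_ord.
rewrite -card_small_sets; apply: eq_card => S; rewrite inE.
apply/imsetP/idP.
  by case=> c; rewrite inE wt_embed01 => h ->.
move=> hS; pose c : {ffun 'I_n -> 'I_(1 + 0).+1} :=
  [ffun i => if i \in S then (@Ordinal 2 1 isT) else (@Ordinal 2 0 isT)].
have e : phi01 c = S.
  by apply/setP => i; rewrite inE ffunE; case: (i \in S).
by exists c; rewrite // inE wt_embed01 e.
Qed.
Local Open Scope nat_scope.
Lemma ffact_le_exp n t : n ^_ t <= n ^ t.
Proof.
rewrite ffact_prod; apply: leq_trans (_ : _ <= \prod_(i < t) n) _.
  by apply: leq_prod => i _; exact: leq_subr.
by rewrite prod_nat_const card_ord.
Qed.

Lemma ffact_ge_exp n t : (n - t) ^ t <= n ^_ t.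
Proof.
rewrite ffact_prod; apply: leq_trans (_ : _ <= \prod_(i < t) (n - t)) _.
  by rewrite prod_nat_const card_ord.
by apply: leq_prod => i _; apply: leq_sub2l; apply: ltnW.
Qed.

Lemma bin_le_exp n i : 'C(n, i) <= n ^ i.
Proof.
apply: leq_trans (ffact_le_exp n i); rewrite -bin_ffact.
by rewrite leq_pmulr // fact_gt0.
Qed.

Lemma sum_upper n t : 0 < n -> 0 < t ->
  t`! * (\sum_(i < t.+1) 'C(n, i)) <= n ^ t + t * t`! * n ^ t.-1.
Proof.
move=> n0 t0; rewrite big_ord_recr /= mulnDr addnC mulnC bin_ffact.
apply: leq_add; first exact: ffact_le_exp.
rewrite [(t * t`!)%N]mulnC -mulnA leq_pmul2l ?fact_gt0 //.
apply: leq_trans (_ : \sum_(i < t) n ^ t.-1 <= _); last by rewrite sum_nat_const card_ord.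
apply: leq_sum => i _; apply: leq_trans (bin_le_exp _ _) _.
by apply: leq_pexp2l => //; move: (ltn_ord i); lia.
Qed.

Lemma sum_lower n t : (n - t) ^ t <= t`! * (\sum_(i < t.+1) 'C(n, i)).
Proof.
rewrite big_ord_recr /= mulnDr; apply: leq_trans (leq_addl _ _).
by rewrite mulnC bin_ffact ffact_ge_exp.
Qed.

Lemma pow_diff (a d k : nat) : (a + d) ^ k <= a ^ k + k * d * (a + d) ^ k.-1.
Proof.
elim: k => [|k IH] //=.
rewrite expnS; case: k IH => [|k] IH.
  by rewrite expn0 muln1 expn1 mul1n muln1 addnC.
apply: leq_trans (_ : (a + d) * (a ^ k.+1 + k.+1 * d * (a + d) ^ k) <= _).
  by rewrite leq_mul2l IH orbT.
rewrite mulnDr [X in X + _]mulnDl -expnS -addnA leq_add2l.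
have hQ : a ^ k.+1 <= (a + d) ^ k.+1 by rewrite leq_exp2r // leq_addr.
move: hQ; rewrite [(a + d) ^ k.+1]expnS.
set P := (a + d) ^ k; set Q := a ^ k.+1 => hQ.
have : d * Q <= d * ((a + d) * P) by rewrite leq_mul2l hQ orbT.
nia.
Qed.

Local Open Scope ring_scope.
Lemma approx_rat (a f n t P Q B : rat) :
  0 < n -> 1 <= f -> 0 <= t -> 0 < P -> 0 <= Q -> 0 <= a ->
  f * a <= n * P + t * f * P -> n * P <= B ->
  (n + 1) * Q <= f * a + t * (t + 1) * Q -> B <= (n + 1) * Q ->
  `|a / B - f^-1| <= t * (t + 1) / n.
Proof.
move=> n0 f1 t0 P0 Q0 a0 F1 NB F2 BM.
have f0 : 0 < f by lra.
have B0 : 0 < B by have := mulr_gt0 n0 P0; lra.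
have U1 : n * f * a <= B * (n + t * f).
  have h1 : n * (f * a) <= n * (n * P + t * f * P) by rewrite ler_pM2l.
  have h2 : n * P * (n + t * f) <= B * (n + t * f).
    rewrite ler_pM2r //; have := mulr_ge0 t0 (ltW f0); lra.
  have e : n * (n * P + t * f * P) = n * P * (n + t * f) by ring.
  have e2 : n * (f * a) = n * f * a by ring.
  lra.
have U : a / B - f^-1 <= t / n.
  have e : a / B - f^-1 - t / n = (n * f * a - B * (n + t * f)) / (B * f * n).
    by field; rewrite !gt_eqF //.
  rewrite -subr_le0 e; apply: mulr_le0_ge0; first by lra.
  by rewrite invr_ge0 !mulr_ge0 // ltW.
have L1 : B * (n + 1) - t * (t + 1) * f * B <= a * f * (n + 1).
  set c := t * (t + 1).
  have c0 : 0 <= c by rewrite mulr_ge0 //; lra.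
  have h1 : c * B <= c * f * B.
    have := ler_wpM2l (mulr_ge0 c0 (ltW B0)) f1; rewrite mulr1 => h.
    have e : c * B * f = c * f * B by ring.
    lra.
  have [hc|hc] := lerP 0 (n + 1 - c).
    have h2 : B * (n + 1 - c) <= (n + 1) * Q * (n + 1 - c) by rewrite ler_wpM2r.
    have h3 : (n + 1) * ((n + 1) * Q) <= (n + 1) * (f * a + c * Q).
      by rewrite ler_wpM2l //; lra.
    have e1 : (n + 1) * Q * (n + 1 - c) = (n + 1) * ((n + 1) * Q) - (n + 1) * (c * Q) by ring.
    have e2 : (n + 1) * (f * a + c * Q) = a * f * (n + 1) + (n + 1) * (c * Q) by ring.
    have e3 : B * (n + 1 - c) = B * (n + 1) - c * B by ring.
    lra.
  have h2 : B * (n + 1 - c) <= 0 by rewrite pmulr_rle0 // ltW.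
  have h3 : 0 <= a * f * (n + 1) by rewrite !mulr_ge0 // ?ltW //; lra.
  have e3 : B * (n + 1 - c) = B * (n + 1) - c * B by ring.
  lra.
have L : f^-1 - a / B <= t * (t + 1) / (n + 1).
  have e : f^-1 - a / B - t * (t + 1) / (n + 1) =
     (B * (n + 1) - a * f * (n + 1) - t * (t + 1) * f * B) / (f * B * (n + 1)).
    by field; rewrite !gt_eqF //; lra.
  rewrite -subr_le0 e; apply: mulr_le0_ge0; first by lra.
  by rewrite invr_ge0 !mulr_ge0 // ?ltW //; lra.
have m1 : t / n <= t * (t + 1) / n.
  by rewrite ler_pM2r ?invr_gt0 // ler_peMr //; lra.
have m2 : t * (t + 1) / (n + 1) <= t * (t + 1) / n.
  apply: ler_wpM2l; first by rewrite mulr_ge0 //; lra.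
  rewrite lef_pV2 ?posrE //; lra.
rewrite ler_norml; apply/andP; split; lra.
Qed.

Lemma approx_nat (n t : nat) (B : rat) : (0 < t)%N -> (t <= n)%N -> (0 < n)%N ->
  n%:R ^+ t <= B -> B <= (n.+1)%:R ^+ t ->
  `|(\sum_(i < t.+1) 'C(n, i))%N%:R / B - (t`!)%:R^-1| <= (t * t.+1)%:R / n%:R.
Proof.
move=> t0 tn n0 NB BM.
have et : t = t.-1.+1 by rewrite prednK.
set A := (\sum_(i < t.+1) 'C(n, i))%N.
have := approx_rat (a := A%:R) (f := (t`!)%:R) (n := n%:R) (t := t%:R)
  (P := n%:R ^+ t.-1) (Q := (n.+1)%:R ^+ t.-1) (B := B).
move=> H; rewrite natrM -natr1; apply: H.
- by rewrite ltr0n.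
- by rewrite ler1n fact_gt0.
- by rewrite ler0n.
- by rewrite exprn_gt0 // ltr0n.
- by rewrite exprn_ge0 // ler0n.
- by rewrite ler0n.
- have := sum_upper n0 t0; rewrite -(ler_nat rat) !natrD !natrM !natrX.
  by rewrite -exprS -et.
- by rewrite -exprS -et.
- have := pow_diff (n - t) t.+1 t.
  have -> : (n - t + t.+1 = n.+1)%N by lia.
  move/leq_trans => /(_ _ (leq_add (sum_lower n t) (leqnn _))).
  rewrite -(ler_nat rat) !natrD !natrM !natrX natr1.
  by rewrite -exprS -et natr1.
- by rewrite natr1 -exprS -et.
Qed.

Lemma asym (t : nat) (eps : rat) (D : nat -> rat) (P : nat -> Prop) :
  (0 < t)%N -> 0 < eps ->
  (forall n, P n -> (t <= n)%N -> (0 < n)%N -> exists B : rat,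
     [/\ n%:R ^+ t <= B, B <= (n.+1)%:R ^+ t &
         D n = (\sum_(i < t.+1) 'C(n, i))%N%:R / B]) ->
  exists N : nat, forall n : nat, (N <= n)%N -> P n -> `|D n - (t`!)%:R^-1| < eps.
Proof.
move=> t0 e0 HD.
exists ((Num.truncn ((t * t.+1)%:R / eps)).+1 + t)%N => n hn Pn.
have tn : (t <= n)%N by lia.
have n0 : (0 < n)%N by lia.
have [B [h1 h2 ->]] := HD n Pn tn n0.
apply: le_lt_trans (approx_nat t0 tn n0 h1 h2) _.
rewrite ltr_pdivrMr ?ltr0n // mulrC -ltr_pdivrMr //.
apply: lt_le_trans (Num.Theory.truncnS_gt _) _.
by rewrite ler_nat; apply: leq_trans hn; apply: leq_addr.
Qed.

Lemma sum_pow_bounds (n t : nat) :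
  (n ^ t <= \sum_(i < t.+1) n ^ i)%N /\ (\sum_(i < t.+1) n ^ i <= n.+1 ^ t)%N.
Proof.
split; first by rewrite big_ord_recr /= leq_addl.
rewrite -[n.+1]addn1 addnC expnDn; apply: leq_sum => i _.
by rewrite exp1n mul1n leq_pmull // bin_gt0 -ltnS ltn_ord.
Qed.
Local Open Scope ring_scope.
Lemma fin_prim_root (K : finFieldType) : {z : K | (#|K|.-1).-primitive_root z}.
Proof.
pose rs := [seq x <- enum K | x != 0].
have m0 : (0 < #|K|.-1)%N by rewrite -subn1 subn_gt0 finNzRing_gt1.
have unity : all (#|K|.-1).-unity_root rs.
  apply/allP => x; rewrite mem_filter => /andP[nz _]; rewrite unity_rootE.
  have := expf_card x; rewrite -(ltn_predK (finNzRing_gt1 K)) exprS => e.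
  by apply/eqP; apply: (mulfI nz); rewrite mulr1.
have urs : uniq rs by rewrite filter_uniq ?enum_uniq.
have srs : (#|K|.-1 <= size rs)%N.
  by rewrite size_filter -(cardC1 (0 : K)) cardE size_filter enumT.
have : exists z : K, (#|K|.-1).-primitive_root z.
  by have [z _ pz] := hasP (cyclic.has_prim_root m0 unity urs srs); exists z.
by move/sigW.
Qed.

Lemma frobD (K : fieldType) p e (x y : K) : p \in [pchar K] ->
  (x + y) ^+ (p ^ e) = x ^+ (p ^ e) + y ^+ (p ^ e).
Proof.
move=> pK; elim: e => [|e IH]; first by rewrite !expn0 !expr1.
rewrite expnSr !exprM IH -!(pFrobenius_autE pK).
by rewrite pFrobenius_autD_comm //; apply: mulrC.
Qed.

Lemma frobB (K : fieldType) p e (x y : K) : p \in [pchar K] ->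
  (x - y) ^+ (p ^ e) = x ^+ (p ^ e) - y ^+ (p ^ e).
Proof.
move=> pK; apply/eqP; rewrite eq_sym subr_eq -frobD // subrK //.
Qed.

Lemma frobM (K : fieldType) N (x y : K) : (x * y) ^+ N = x ^+ N * y ^+ N.
Proof. exact: exprMn. Qed.

Lemma frob_affine_prod (K : fieldType) p e (I : finType) (S : {set I}) (a b : I -> K) y :
  p \in [pchar K] -> (forall i, a i ^+ (p ^ e) = a i) -> (forall i, b i ^+ (p ^ e) = b i) ->
  (\prod_(i in S) (a i * y + b i)) ^+ (p ^ e) = \prod_(i in S) (a i * y ^+ (p ^ e) + b i).
Proof.
move=> pK ha hb; rewrite -prodrXl; apply: eq_bigr => i _.
by rewrite frobD // exprMn ha hb.
Qed.

Definition Pol (K : fieldType) (I : finType) (a b : I -> K) (S : {set I}) : {poly K} :=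
  \prod_(i in S) (a i *: 'X + (b i)%:P).

Lemma horner_Pol (K : fieldType) (I : finType) (a b : I -> K) S x :
  (Pol a b S).[x] = \prod_(i in S) (a i * x + b i).
Proof. by rewrite /Pol horner_prod; apply: eq_bigr => i _; rewrite !hornerE. Qed.

Lemma size_prod_seq (K : fieldType) (I : Type) (r : seq I) (F : I -> {poly K}) :
  (forall i, (size (F i) <= 2)%N) -> (size (\prod_(i <- r) F i)%R <= (size r).+1)%N.
Proof.
move=> hF; elim: r => [|i r IH]; first by rewrite big_nil size_poly1.
rewrite big_cons; apply: leq_trans (size_polyMleq _ _) _.
have := hF i; move: IH; simpl; lia.
Qed.

Lemma size_Pol (K : fieldType) (I : finType) (a b : I -> K) S :
  (size (Pol a b S) <= #|S|.+1)%N.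
Proof.
rewrite /Pol -big_enum cardE; apply: size_prod_seq => i.
apply: leq_trans (size_polyD _ _) _; rewrite geq_max size_polyC.
by rewrite (leq_trans (size_scale_leq _ _)) ?size_polyX //; case: (_ != 0).
Qed.

Lemma Pol_mem (K : fieldType) (I : finType) (a b : I -> K) (lam : K) S1 S2 i :
  (forall j, a j != 0) -> (forall j j', b j / a j = b j' / a j' -> j = j') ->
  lam != 0 -> Pol a b S1 = lam *: Pol a b S2 -> i \in S1 -> i \in S2.
Proof.
move=> anz binj lnz e iS1.
pose x := - (b i / a i).
have hx j : (a j * x + b j == 0) = (j == i).
  apply/eqP/eqP => [h|->]; last by rewrite /x mulrN mulrCA divff // mulr1 addNr.
  have hx' : x = - (b j / a j).
    apply: (mulfI (anz j)); rewrite [RHS]mulrN [in RHS]mulrCA divff // mulr1.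
    by apply/eqP; rewrite -addr_eq0 h.
  by apply: binj; apply: oppr_inj; rewrite -hx'.
have : (Pol a b S1).[x] = 0.
  rewrite horner_Pol (bigD1 i) //=.
  by move: (hx i); rewrite eqxx => /eqP ->; rewrite mul0r.
rewrite e hornerZ horner_Pol => /eqP; rewrite mulf_eq0 (negbTE lnz) /=.
rewrite prodf_seq_eq0 => /hasP [j _ /andP [jS2 /eqP h]].
by move/eqP: h; rewrite hx => /eqP <-.
Qed.

Lemma roots_zero (K : fieldType) (D : {poly K}) (rs : seq K) t :
  (size D <= t.+1)%N -> size rs = t.+1 -> uniq rs -> all (root D) rs -> D = 0.
Proof.
move=> sD srs urs rts; case: (eqVneq D 0) => // nz.
by have := max_poly_roots nz rts urs; rewrite srs => h; move: (leq_trans h sD); rewrite ltnn.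
Qed.
Definition fmap (K : fieldType) n (g : 'I_n -> K) (x : 'rV[int]_n) : K :=
  \prod_i g i ^ (x 0 i).

Lemma fmap_neq0 (K : fieldType) n (g : 'I_n -> K) x :
  (forall i, g i != 0) -> fmap g x != 0.
Proof. by move=> gnz; rewrite /fmap prodf_seq_neq0; apply/allP=> i _; apply: expfz_neq0. Qed.

Lemma fmapD (K : fieldType) n (g : 'I_n -> K) x y :
  (forall i, g i != 0) -> fmap g (x + y) = fmap g x * fmap g y.
Proof.
move=> gnz; rewrite /fmap -big_split /=; apply: eq_bigr => i _.
by rewrite mxE exprzDr // unitfE.
Qed.

Lemma fmap0 (K : fieldType) n (g : 'I_n -> K) : fmap g 0 = 1.
Proof. by rewrite /fmap big1 // => i _; rewrite mxE expr0z. Qed.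

Lemma fmapB (K : fieldType) n (g : 'I_n -> K) x y :
  (forall i, g i != 0) -> fmap g (x - y) = fmap g x / fmap g y.
Proof.
move=> gnz; apply: (canRL (mulfK (fmap_neq0 y gnz))).
by rewrite -fmapD // subrK.
Qed.

Definition supp n (b : 'rV[int]_n) : {set 'I_n} := [set i | b 0 i != 0].

Lemma ball01 n t (b : 'rV[int]_n) i : in_ball t 1 0 b -> b 0 i = 0 \/ b 0 i = 1.
Proof. case=> /(_ i) /andP[h1 h2] _; lia. Qed.

Lemma fmap_ball (K : fieldType) n t (g : 'I_n -> K) b :
  in_ball t 1 0 b -> fmap g b = \prod_(i in supp b) g i.
Proof.
move=> hb; rewrite /fmap [RHS]big_mkcond; apply: eq_bigr => i _; rewrite inE.
by case: (ball01 i hb) => ->; rewrite ?expr0z ?expr1z.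
Qed.

Lemma ball_supp n t (b1 b2 : 'rV[int]_n) :
  in_ball t 1 0 b1 -> in_ball t 1 0 b2 -> supp b1 = supp b2 -> b1 = b2.
Proof.
move=> h1 h2 e; apply/rowP => i.
have : (i \in supp b1) = (i \in supp b2) by rewrite e.
rewrite !inE.
by case: (ball01 i h1) => ->; case: (ball01 i h2) => ->.
Qed.

Lemma supp_card n t (b : 'rV[int]_n) : in_ball t 1 0 b -> (#|supp b| <= t)%N.
Proof. by case. Qed.

Definition unitvec n (i0 : 'I_n) (j : nat) : 'rV[int]_n :=
  \row_i (if i == i0 then j%:Z else 0).

Lemma fmap_unitvec (K : fieldType) n (g : 'I_n -> K) i0 j :
  fmap g (unitvec i0 j) = g i0 ^+ j.
Proof.
rewrite /fmap (bigD1 i0) //= big1 ?mulr1 => [|i /negbTE ne]; rewrite mxE ?eqxx //.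
by rewrite ne expr0z.
Qed.

Lemma mod_mul_inj (i j k V : nat) : (0 < k)%N -> (i < V)%N -> (j < V)%N ->
  (i * k == j * k %[mod k * V])%N -> i = j.
Proof.
move=> k0 iV jV; rewrite [(k * V)%N]mulnC -!muln_modl // !modn_small //.
by rewrite eqn_mul2r eqn0Ngt k0 /= => /eqP.
Qed.

Lemma framework (K : finFieldType) n t k V (g : 'I_n -> K) (i0 : 'I_n) :
  (0 < k)%N -> (k * V).-primitive_root (g i0) -> (k * V = #|K|.-1)%N ->
  (forall i, g i != 0) ->
  (forall S1 S2 : {set 'I_n}, (#|S1| <= t)%N -> (#|S2| <= t)%N ->
     (\prod_(i in S1) g i) ^+ k = (\prod_(i in S2) g i) ^+ k -> S1 = S2) ->
  lattice_packing_with_density n t 1 0 ((ball_size n t 1 0)%:R / V%:R).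
Proof.
move=> k0 prim ekV gnz H.
have V0 : (0 < V)%N.
  by rewrite lt0n; apply/eqP=> V0; move: (prim_order_gt0 prim); rewrite V0 muln0.
pose L (x : 'rV[int]_n) := fmap g x ^+ k = 1.
exists L, V; split => //.
- split; first by rewrite /L fmap0 expr1n.
  by move=> x y; rewrite /L fmapB // expr_div_n => -> ->; rewrite divr1.
- exists (fun j : 'I_V => unitvec i0 j); split.
    move=> i j; rewrite /L fmapB // !fmap_unitvec expr_div_n.
    move/divr1_eq; rewrite -!exprM => /eqP; rewrite (eq_prim_root_expr prim).
    by move/mod_mul_inj => /(_ k0 (ltn_ord i) (ltn_ord j)) /val_inj.
  move=> x.
  have xn1 : fmap g x ^+ (k * V) = 1.
    have := expf_card (fmap g x); rewrite ekV -(ltn_predK (finNzRing_gt1 K)) exprS.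
    by move/(canRL (mulKf (fmap_neq0 x gnz))) => /= ->; rewrite mulVf // fmap_neq0.
  have [e he] := prim_rootP prim xn1.
  exists (Ordinal (ltn_pmod e V0)).
  rewrite /L fmapB // fmap_unitvec he /= {1}(divn_eq e V) exprD mulfK; last first.
    by apply: expf_neq0; apply: gnz.
  by rewrite -exprM -mulnA (mulnC V k) mulnC exprM (prim_expr_order prim) expr1n.
- move=> v w b1 b2 Lv Lw h1 h2 e.
  have Lb : L (b1 - b2).
    have -> : b1 - b2 = w - v by rewrite -[b1](addKr v) e addrA addrK addrC.
    by rewrite /L fmapB // expr_div_n Lv Lw divr1.
  move: Lb; rewrite /L fmapB // expr_div_n => /divr1_eq.
  rewrite !(fmap_ball _ h1) !(fmap_ball _ h2) => /H.
  move=> /(_ (supp_card h1) (supp_card h2)) /(ball_supp h1 h2) eb.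
  by move: e; rewrite eb => /addIr.
Qed.

Lemma prim_neq0 (K : fieldType) m (z : K) : m.-primitive_root z -> z != 0.
Proof.
move=> pz; apply/eqP => z0; have := prim_expr_order pz; rewrite z0 expr0n.
by have := prim_order_gt0 pz; case: m pz => // m _ _ /eqP; rewrite eq_sym oner_eq0.
Qed.

Lemma prim_pow_inj (K : fieldType) m (z : K) i j : m.-primitive_root z ->
  (i < m)%N -> (j < m)%N -> z ^+ i = z ^+ j -> i = j.
Proof.
move=> pz im jm /eqP; rewrite (eq_prim_root_expr pz) !modn_small //.
by move/eqP.
Qed.

Lemma prim_pow_ne1 (K : fieldType) m (z : K) i : m.-primitive_root z ->
  (0 < i < m)%N -> z ^+ i != 1.
Proof.
move=> pz /andP[i0 im]; rewrite -(prim_order_dvd pz).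
by apply/negP => /(dvdn_leq i0); lia.
Qed.

Lemma frobX_fixed (K : fieldType) (x : K) q e : x ^+ q = x -> x ^+ (q ^ e) = x.
Proof.
move=> hx; elim: e => [|e IH]; first by rewrite expn0 expr1.
by rewrite expnSr exprM IH hx.
Qed.

Lemma part1_core (K : finFieldType) (p a n t : nat) :
  p \in [pchar K] -> n.+1 = (p ^ a)%N -> #|K| = (n.+1 ^ t)%N -> (2 <= t)%N -> (0 < n)%N ->
  lattice_packing_with_density n t 1 0 ((ball_size n t 1 0)%:R / ((n.+1 ^ t).-1)%:R).
Proof.
move=> pK eq hK t2 n0.
have [psi ppsi] := fin_prim_root K; rewrite hK in ppsi.
pose s := (\sum_(i < t) n.+1 ^ i)%N.
have ems : ((n.+1 ^ t).-1 = n * s)%N by rewrite predn_exp.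
have frD e (x y : K) : (x + y) ^+ (n.+1 ^ e) = x ^+ (n.+1 ^ e) + y ^+ (n.+1 ^ e).
  by rewrite eq -expnM frobD.
have frB e (x y : K) : (x - y) ^+ (n.+1 ^ e) = x ^+ (n.+1 ^ e) - y ^+ (n.+1 ^ e).
  by rewrite eq -expnM frobB.
pose c (j : 'I_n) := psi ^+ (j * s).
have cq j : c j ^+ n.+1 = c j.
  rewrite /c -exprM; apply/eqP; rewrite (eq_prim_root_expr ppsi) ems.
  by rewrite mulnS addnC -mulnA (mulnC s n) modnMDl.
have cF e j : c j ^+ (n.+1 ^ e) = c j := frobX_fixed e (cq j).
have conj_lt e : (e < t)%N -> (n.+1 ^ e < (n.+1 ^ t).-1)%N.
  move=> et.
  have h1 : (n.+1 ^ e <= n.+1 ^ t.-1)%N by rewrite leq_pexp2l //; lia.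
  have h2 : (n.+1 ^ t = n.+1 * n.+1 ^ t.-1)%N by rewrite -expnS; congr expn; lia.
  have h3 : (n.+1 <= n.+1 ^ t.-1)%N.
    by rewrite -{1}(expn1 n.+1) leq_pexp2l //; lia.
  move: h1 h2 h3; set X := (n.+1 ^ t.-1)%N; set Y := (n.+1 ^ t)%N; nia.
have psi_inj i j : (i < t)%N -> (j < t)%N -> psi ^+ (n.+1 ^ i) = psi ^+ (n.+1 ^ j) -> i = j.
  move=> it jt /(prim_pow_inj ppsi (conj_lt _ it) (conj_lt _ jt)).
  by apply: expnI.
have psi_ne1 e : (e < t)%N -> psi ^+ (n.+1 ^ e) != 1.
  by move=> et; apply: (prim_pow_ne1 ppsi); rewrite expn_gt0 /= conj_lt.
pose phi := psi - 1.
have phiF e : phi ^+ (n.+1 ^ e) = psi ^+ (n.+1 ^ e) - 1 by rewrite frB expr1n.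
have phi_nz e : (e < t)%N -> phi ^+ (n.+1 ^ e) != 0.
  by move=> et; rewrite phiF subr_eq0 psi_ne1.
have psi_nz := prim_neq0 ppsi.
have c_nz j : c j != 0 by apply: expf_neq0.
have s0 : (0 < s)%N.
  have : (0 < (n.+1 ^ t).-1)%N by have := conj_lt 0 (ltnW t2); lia.
  by rewrite ems muln_gt0 => /andP[].
have c_inj : injective c.
  move=> i j /(prim_pow_inj ppsi).
  have lt (k : 'I_n) : (k * s < (n.+1 ^ t).-1)%N by rewrite ems ltn_pmul2r // ltn_ord.
  move=> /(_ (lt i) (lt j)) /eqP; rewrite eqn_pmul2r // => /eqP; apply: val_inj.
pose g j := c j * phi + 1.
have g_nz j : g j != 0.
  apply/negP => /eqP h.
  have h1 := congr1 (fun x => x ^+ (n.+1 ^ 1)) h; move: h1 => /=.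
  rewrite frD exprMn cF expr1n expr0n /= => h1.
  have : c j * phi ^+ (n.+1 ^ 1) = c j * phi.
    by apply: (addIr 1); rewrite h1 -[RHS]/(g j) h.
  have phi0 : phi = psi ^+ (n.+1 ^ 0) - 1 by rewrite expn0 expr1.
  move/(mulfI (c_nz j)); rewrite phiF [X in _ = X]phi0.
  by move/subIr/psi_inj => /(_ t2 (ltnW t2)).
have i0lt : (0 < n)%N := n0.
pose i0 : 'I_n := Ordinal i0lt.
have g0 : g i0 = psi by rewrite /g /c /= mul0n expr0 mul1r subrK.
apply: (framework (k := 1) (g := g) (i0 := i0)) => //.
- by rewrite mul1n g0.
- by rewrite mul1n hK.
move=> S1 S2 h1 h2; rewrite !expr1 => e.
pose b := fun _ : 'I_n => (1 : K).
pose D := Pol c b S1 - Pol c b S2.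
have sD : (size D <= t.+1)%N.
  apply: leq_trans (size_polyD _ _) _; rewrite size_polyN geq_max.
  by rewrite !(leq_trans (size_Pol _ _ _)) // ltnS.
have h0 S : (Pol c b S).[0] = 1.
  by rewrite horner_Pol big1 // => i _; rewrite mulr0 add0r.
have rt : all (root D) (0 :: [seq phi ^+ (n.+1 ^ e) | e <- iota 0 t]).
  rewrite /=; apply/andP; split.
    by rewrite /root /D hornerD hornerN !h0 subrr.
  apply/allP => y /mapP [k _ ->]; rewrite /root /D hornerD hornerN !horner_Pol.
  rewrite eq -expnM -!(fun S => @frob_affine_prod _ _ _ _ S c b _ pK) /b; first by rewrite e subrr.
  - by move=> i; rewrite expnM -eq cF.
  - by move=> i; rewrite expr1n.
  - by move=> i; rewrite expnM -eq cF.
  - by move=> i; rewrite expr1n.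
have u : uniq (0 :: [seq phi ^+ (n.+1 ^ e) | e <- iota 0 t]).
  rewrite /= map_inj_in_uniq ?iota_uniq ?andbT.
    apply/mapP => [[k hk /esym /eqP]]; rewrite (negbTE (phi_nz k _)) //.
    by move: hk; rewrite mem_iota; lia.
  move=> i j; rewrite !mem_iota !add0n => /andP[_ hi] /andP[_ hj].
  by rewrite !phiF => /subIr /psi_inj; apply.
have sz : size (0 :: [seq phi ^+ (n.+1 ^ e) | e <- iota 0 t]) = t.+1.
  by rewrite /= size_map size_iota.
have D0 := roots_zero sD sz u rt.
have eP : Pol c b S1 = 1 *: Pol c b S2.
  by rewrite scale1r; apply/eqP; rewrite -subr_eq0 -/D D0.
have binj j j' : b j / c j = b j' / c j' -> j = j'.
  by rewrite /b !div1r => /invr_inj /c_inj.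
apply/setP => i; apply/idP/idP => hi.
  exact: Pol_mem c_nz binj (oner_neq0 _) eP hi.
by apply: Pol_mem c_nz binj (oner_neq0 _) _ hi; rewrite scale1r eP scale1r.
Qed.

Lemma part2_core (K : finFieldType) (p a n t : nat) :
  p \in [pchar K] -> n = (p ^ a)%N -> #|K| = (n ^ t.+1)%N -> (2 <= t)%N -> (2 <= n)%N ->
  lattice_packing_with_density n t 1 0
    ((ball_size n t 1 0)%:R / (\sum_(i < t.+1) n ^ i)%N%:R).
Proof.
move=> pK eq hK t2 n2.
have [psi ppsi] := fin_prim_root K; rewrite hK in ppsi.
pose s := (\sum_(i < t.+1) n ^ i)%N.
have ems : ((n ^ t.+1).-1 = n.-1 * s)%N by rewrite predn_exp.
have frD e (x y : K) : (x + y) ^+ (n ^ e) = x ^+ (n ^ e) + y ^+ (n ^ e).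
  by rewrite eq -expnM frobD.
have frB e (x y : K) : (x - y) ^+ (n ^ e) = x ^+ (n ^ e) - y ^+ (n ^ e).
  by rewrite eq -expnM frobB.
have en : n = n.-1.+1 by lia.
pose c (j : 'I_n) := if (j : nat) == 0%N then 0 else psi ^+ (j.-1 * s).
have cq j : c j ^+ n = c j.
  rewrite /c; case: ifP => _; first by rewrite expr0n; case: (n) n2.
  rewrite -exprM; apply/eqP; rewrite (eq_prim_root_expr ppsi) ems.
  have E x : (x * n = x + x * n.-1)%N by rewrite -mulnS -en.
  by rewrite E addnC -mulnA (mulnC s) modnMDl.
have cF e j : c j ^+ (n ^ e) = c j := frobX_fixed e (cq j).
have conj_lt e : (e < t.+1)%N -> (n ^ e < (n ^ t.+1).-1)%N.
  move=> et.
  have h1 : (n ^ e <= n ^ t)%N by rewrite leq_pexp2l //; lia.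
  have h2 : (n ^ t.+1 = n * n ^ t)%N by rewrite expnS.
  have h3 : (n <= n ^ t)%N.
    by rewrite -{1}(expn1 n) leq_pexp2l //; lia.
  move: h1 h2 h3; set X := (n ^ t)%N; set Y := (n ^ t.+1)%N; nia.
have psi_inj i j : (i < t.+1)%N -> (j < t.+1)%N -> psi ^+ (n ^ i) = psi ^+ (n ^ j) -> i = j.
  move=> it jt /(prim_pow_inj ppsi (conj_lt _ it) (conj_lt _ jt)).
  by apply: expnI.
have psi_nz := prim_neq0 ppsi.
have s0 : (0 < s)%N.
  have : (0 < (n ^ t.+1).-1)%N by have := conj_lt 0 (ltn0Sn _); lia.
  by rewrite ems muln_gt0 => /andP[].
have c_inj : injective c.
  have lt (k : 'I_n) : (k.-1 * s < (n ^ t.+1).-1)%N.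
    by rewrite ems ltn_pmul2r //; have := ltn_ord k; lia.
  move=> i j; rewrite /c.
  case: ifP => /eqP hi; case: ifP => /eqP hj.
  - by move=> _; apply: ord_inj; rewrite hi hj.
  - by move/esym/eqP; rewrite expf_eq0 (negbTE psi_nz) andbF.
  - by move/eqP; rewrite expf_eq0 (negbTE psi_nz) andbF.
  move=> /(prim_pow_inj ppsi (lt i) (lt j)) /eqP; rewrite eqn_pmul2r // => /eqP h.
  by apply: ord_inj; lia.
have n0 : (0 < n)%N by lia.
pose g j := psi + c j.
have g_nz j : g j != 0.
  apply/negP => /eqP h.
  have hp : psi = 0 - c j by rewrite sub0r; apply/eqP; rewrite -addr_eq0; apply/eqP.
  have : psi ^+ (n ^ 1) = psi ^+ (n ^ 0).
    by rewrite expn0 expr1 {1}hp frB expr0n cF expn1 (gtn_eqF n0) [RHS]hp.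
  by move/psi_inj => /(_ (ltnW t2) (ltn0Sn _)).
pose i0 : 'I_n := Ordinal n0.
have g0 : g i0 = psi by rewrite /g /c /= addr0.
have k0 : (0 < n.-1)%N by lia.
apply: (framework (k := n.-1) (g := g) (i0 := i0)) => //.
- by rewrite g0 -ems.
- by rewrite hK ems.
move=> S1 S2 h1 h2 e.
pose A := \prod_(i in S1) g i; pose B := \prod_(i in S2) g i.
have A0 : A != 0 by rewrite prodf_seq_neq0; apply/allP => i _; rewrite g_nz implybT.
have B0 : B != 0 by rewrite prodf_seq_neq0; apply/allP => i _; rewrite g_nz implybT.
pose lam := A / B.
have lam0 : lam != 0 by rewrite mulf_neq0 ?invr_eq0.
have lamk : lam ^+ n.-1 = 1 by rewrite /lam expr_div_n e divff // expf_neq0.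
have lamq : lam ^+ n = lam by rewrite -(prednK n0) exprS lamk mulr1.
have lamF e' : lam ^+ (n ^ e') = lam := frobX_fixed e' lamq.
have AB : A = lam * B by rewrite /lam divfK.
pose one := fun _ : 'I_n => (1 : K).
pose D := Pol one c S1 - lam *: Pol one c S2.
have sD : (size D <= t.+1)%N.
  apply: leq_trans (size_polyD _ _) _; rewrite size_polyN geq_max.
  rewrite (leq_trans (size_Pol _ _ _)) ?ltnS //.
  by rewrite (leq_trans (size_scale_leq _ _)) // (leq_trans (size_Pol _ _ _)) ?ltnS.
have hP S y : (Pol one c S).[y] = \prod_(i in S) (1 * y + c i) by rewrite horner_Pol.
have rt : all (root D) [seq psi ^+ (n ^ e') | e' <- iota 0 t.+1].
  apply/allP => y /mapP [k _ ->]; rewrite /root /D hornerD hornerN hornerZ !hP.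
  have nk : (n ^ k = p ^ (a * k))%N by rewrite eq -expnM.
  rewrite nk -!(fun S => @frob_affine_prod _ _ _ _ S one c _ pK).
  - rewrite -nk.
    have -> : \prod_(i in S1) (1 * psi + c i) = A by apply: eq_bigr => i _; rewrite mul1r.
    have -> : \prod_(i in S2) (1 * psi + c i) = B by apply: eq_bigr => i _; rewrite mul1r.
    by rewrite -{1}(lamF k) -exprMn -frB -AB subrr expr0n eqn0Ngt expn_gt0 n0.
  - by move=> i; rewrite expr1n.
  - by move=> i; rewrite -nk cF.
  - by move=> i; rewrite expr1n.
  - by move=> i; rewrite -nk cF.
have u : uniq [seq psi ^+ (n ^ e') | e' <- iota 0 t.+1].
  rewrite map_inj_in_uniq ?iota_uniq //.
  move=> i j; rewrite !mem_iota !add0n => /andP[_ hi] /andP[_ hj].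
  by move/psi_inj; apply.
have sz : size [seq psi ^+ (n ^ e') | e' <- iota 0 t.+1] = t.+1.
  by rewrite size_map size_iota.
have D0 := roots_zero sD sz u rt.
have eP : Pol one c S1 = lam *: Pol one c S2.
  by apply/eqP; rewrite -subr_eq0 -/D D0.
have one_nz j : one j != 0 by apply: oner_neq0.
have binj j j' : c j / one j = c j' / one j' -> j = j'.
  by rewrite /one !divr1 => /c_inj.
apply/setP => i; apply/idP/idP => hi.
  exact: Pol_mem one_nz binj lam0 eP hi.
apply: Pol_mem one_nz binj (invr_neq0 lam0) _ hi.
by rewrite eP scalerA mulVf // scale1r.
Qed.

Lemma pp_decomp m : prime_power m -> exists p a, [/\ prime p, (0 < a)%N & m = (p ^ a)%N].
Proof. by case=> p [a [pp [a0 ->]]]; exists p, a. Qed.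

Lemma part1 n t : prime_power n.+1 -> (2 <= t)%N -> (t <= n)%N ->
  lattice_packing_with_density n t 1 0 (delta1 n t).
Proof.
move=> /pp_decomp [p [a [pp a0 eq]]] t2 tn.
have at0 : (0 < a * t)%N by rewrite muln_gt0 a0 /=; lia.
have [K pK cK] := pPrimePowerField pp at0.
have hK : #|K| = (n.+1 ^ t)%N by rewrite cK eq expnM.
have := part1_core pK eq hK t2 (_ : (0 < n)%N).
rewrite /delta1 -ball_size01 -subn1 natrB ?expn_gt0 //; apply; lia.
Qed.

Lemma sum_pow_rat n t : (2 <= n)%N ->
  (\sum_(i < t.+1) n ^ i)%N%:R = (((n ^ t.+1)%N%:R - 1) / (n%:R - 1) : rat).
Proof.
move=> n2.
have e := predn_exp n t.+1.
have n1 : (n%:R - 1 : rat) != 0 by rewrite subr_eq0 pnatr_eq1; lia.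
have h1 : ((n ^ t.+1).-1)%:R = ((n ^ t.+1)%N%:R - 1 : rat).
  by rewrite -subn1 natrB // expn_gt0; lia.
have h2 : (n.-1)%:R = (n%:R - 1 : rat) by rewrite -subn1 natrB //; lia.
by rewrite -h1 -h2 e natrM (mulrC (n.-1)%:R) mulfK // h2.
Qed.

Lemma part2 n t : prime_power n -> (2 <= t)%N -> (t <= n)%N ->
  lattice_packing_with_density n t 1 0 (delta2 n t).
Proof.
move=> /pp_decomp [p [a [pp a0 eq]]] t2 tn.
have at0 : (0 < a * t.+1)%N by rewrite muln_gt0 a0.
have [K pK cK] := pPrimePowerField pp at0.
have hK : #|K| = (n ^ t.+1)%N by rewrite cK eq expnM.
have n2 : (2 <= n)%N by lia.
have := part2_core pK eq hK t2 n2.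
by rewrite /delta2 -ball_size01 sum_pow_rat.
Qed.

Lemma part3 (t : nat) (eps : rat) : (2 <= t)%N -> 0 < eps ->
  exists N : nat, forall n : nat, (N <= n)%N -> prime_power n.+1 ->
    `|delta1 n t - (t`!)%:R^-1| < eps.
Proof.
move=> t2 e0; apply: (asym (P := fun n => prime_power n.+1)) => //; first lia.
move=> n _ tn n0; exists ((n.+1 ^ t)%N%:R - 1); split.
- rewrite -natrX lerBrDr natr1 ler_nat ltn_exp2r //; lia.
- by rewrite natrX lerBlDr lerDl.
- by [].
Qed.

Lemma part4 (t : nat) (eps : rat) : (2 <= t)%N -> 0 < eps ->
  exists N : nat, forall n : nat, (N <= n)%N -> prime_power n ->
    `|delta2 n t - (t`!)%:R^-1| < eps.
Proof.
move=> t2 e0; apply: (asym (P := prime_power)) => //; first lia.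
move=> n /pp_decomp [p [a [pp a0 eq]]] tn n0.
have n2 : (2 <= n)%N by lia.
exists (\sum_(i < t.+1) n ^ i)%N%:R; have [b1 b2] := sum_pow_bounds n t; split.
- by rewrite -natrX ler_nat.
- by rewrite -natrX ler_nat.
- by rewrite /delta2 sum_pow_rat.
Qed.

Theorem corollary6 :
  [/\ (forall n t : nat, prime_power n.+1 -> (2 <= t)%N -> (t <= n)%N ->
         lattice_packing_with_density n t 1 0 (delta1 n t)),
      (forall n t : nat, prime_power n -> (2 <= t)%N -> (t <= n)%N ->
         lattice_packing_with_density n t 1 0 (delta2 n t)),
      (forall (t : nat) (eps : rat), (2 <= t)%N -> 0 < eps ->
         exists N : nat, forall n : nat, (N <= n)%N -> prime_power n.+1 ->
           `|delta1 n t - (t`!)%:R^-1| < eps) &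
      (forall (t : nat) (eps : rat), (2 <= t)%N -> 0 < eps ->
         exists N : nat, forall n : nat, (N <= n)%N -> prime_power n ->
           `|delta2 n t - (t`!)%:R^-1| < eps)].
Proof.
split; [exact: part1 | exact: part2 | exact: part3 | exact: part4].
Qed.
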